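(* Let $\Bbbk$ be a field and $\mathcal{C}$ an additive pivotal $\Bbbk$-category in which every indecomposable object is absolutely indecomposable and every element of the radical of the endomorphism ring of an indecomposable object is nilpotent. Let $V$ be an absolutely simple object of $\mathcal{C}$, and fix a decomposition $V\otimes V^*=\bigoplus_{k\in I}W_k$ into indecomposable objects, with inclusions $i_k:W_k\to V\otimes V^*$, projections $p_k:V\otimes V^*\to W_k$ ($p_ki_k=\mathrm{Id}_{W_k}$), and idempotents $e_k=i_kp_k$ (pairwise orthogonal, summing to $\mathrm{Id}_{V\otimes V^*}$). Then there is a unique $j\in I$ satisfying the following equivalent conditions: (1) $e_j\,\mathrm{coev}_V=\mathrm{coev}_V$; (2) $\operatorname{Hom}_{\mathcal{C}}(\mathbb{1},W_j)$ is non-zero and is spanned by $p_j\,\mathrm{coev}_V$. There is also a unique $j'\in I$ satisfying the following equivalent conditions: (1') $\widetilde{\mathrm{ev}}_V\,e_{j'}=\widetilde{\mathrm{ev}}_V$; (2') $\operatorname{Hom}_{\mathcal{C}}(W_{j'},\mathbb{1})$ is non-zero and is spanned by $\widetilde{\mathrm{ev}}_V\, i_{j'}$.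
   Context: A (strict) tensor category $\mathcal{C}$ with unit $\mathbb{1}$ has a left duality if each object $V$ has an object $V^*$ and morphisms $\mathrm{coev}_V:\mathbb{1}\to V\otimes V^*$, $\mathrm{ev}_V:V^*\otimes V\to\mathbb{1}$ satisfying the zig-zag identities; a right duality consists of morphisms $\widetilde{\mathrm{coev}}_V:\mathbb{1}\to V^*\otimes V$, $\widetilde{\mathrm{ev}}_V:V\otimes V^*\to\mathbb{1}$ satisfying the analogous zig-zag identities. A pivotal category is a tensor category with compatible left and right dualities (same dual objects, same dual morphisms $f^*$, same isomorphisms $W^*\otimes V^*\cong (V\otimes W)^*$). A tensor $\Bbbk$-category is a tensor category whose hom-sets are $\Bbbk$-modules, with composition and tensor product bilinear, and $\operatorname{End}(\mathbb{1})$ free of rank one (identified with $\Bbbk$). An object $V$ is absolutely simple if $\operatorname{End}_{\mathcal{C}}(V)$ is free of rank one over $\Bbbk$ (i.e. $\Bbbk\to\operatorname{End}(V)$, $k\mapsto k\,\mathrm{Id}_V$ is an isomorphism), and absolutely indecomposable if $\operatorname{End}_{\mathcal{C}}(V)/\operatorname{Rad}(\operatorname{End}_{\mathcal{C}}(V))\cong\Bbbk$. *)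

(* Defs.v *)
From HB Require Import structures.
From mathcomp Require Import all_boot all_algebra.
Set Implicit Arguments. Unset Strict Implicit. Unset Printing Implicit Defensive.
Import GRing.Theory.
Local Open Scope ring_scope.

Record catData (K : fieldType) := CatData {
  Obj :> Type;
  Mor : Obj -> Obj -> lmodType K;
  idm : forall X : Obj, Mor X X;
  cmp : forall X Y Z : Obj, Mor Y Z -> Mor X Y -> Mor X Z }.
Arguments Mor {K c} _ _.
Arguments idm {K c} _.
Arguments cmp {K c X Y Z} _ _.

Notation "f '∘' g" := (cmp f g) (at level 41, right associativity).

Record kcat_axioms (K : fieldType) (C : catData K) : Prop := {
  cmpA : forall (X Y Z W : C) (f : Mor Z W) (g : Mor Y Z) (h : Mor X Y),
    f ∘ (g ∘ h) = (f ∘ g) ∘ h;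
  cmp1m : forall (X Y : C) (f : Mor X Y), idm Y ∘ f = f;
  cmpm1 : forall (X Y : C) (f : Mor X Y), f ∘ idm X = f;
  cmp_linl : forall (X Y Z : C) (a : K) (f g : Mor Y Z) (h : Mor X Y),
    (a *: f + g) ∘ h = a *: (f ∘ h) + g ∘ h;
  cmp_linr : forall (X Y Z : C) (a : K) (f : Mor Y Z) (g h : Mor X Y),
    f ∘ (a *: g + h) = a *: (f ∘ g) + f ∘ h }.

Record additive_cat (K : fieldType) (C : catData K) : Prop := {
  zero_obj : exists Z : C, idm Z = 0;
  biprod : forall X Y : C, exists (S : C) (i1 : Mor X S) (p1 : Mor S X)
      (i2 : Mor Y S) (p2 : Mor S Y),
    [/\ p1 ∘ i1 = idm X, p2 ∘ i2 = idm Y & i1 ∘ p1 + i2 ∘ p2 = idm S] }.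

(* Tensor (monoidal) structure.  We use a general (not necessarily strict)
   monoidal structure with associator and unitors; strict tensor categories
   are the special case where these are identities. *)
Record tensData (K : fieldType) (C : catData K) := TensData {
  tens : C -> C -> C;
  tensm : forall X X' Y Y' : C, Mor X Y -> Mor X' Y' -> Mor (tens X X') (tens Y Y');
  tunit : C;
  asc : forall X Y Z : C, Mor (tens (tens X Y) Z) (tens X (tens Y Z));
  ascI : forall X Y Z : C, Mor (tens X (tens Y Z)) (tens (tens X Y) Z);
  lun : forall X : C, Mor (tens tunit X) X;
  lunI : forall X : C, Mor X (tens tunit X);
  run : forall X : C, Mor (tens X tunit) X;
  runI : forall X : C, Mor X (tens X tunit) }.
Arguments tensm {K C} t {X X' Y Y'} _ _.

Section Tensor.
Variables (K : fieldType) (C : catData K) (T : tensData C).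
Local Notation "X ⊗ Y" := (tens T X Y) (at level 37, left associativity).
Local Notation "f ⊠ g" := (tensm T f g) (at level 31, left associativity).
Local Notation I1 := (tunit T).

Record tens_axioms : Prop := {
  tensm_id : forall X Y : C, idm X ⊠ idm Y = idm (X ⊗ Y);
  tensm_cmp : forall (X X' Y Y' Z Z' : C) (f : Mor Y Z) (g : Mor X Y)
      (f' : Mor Y' Z') (g' : Mor X' Y'), (f ∘ g) ⊠ (f' ∘ g') = (f ⊠ f') ∘ (g ⊠ g');
  tensm_linl : forall (X X' Y Y' : C) (a : K) (f g : Mor X Y) (h : Mor X' Y'),
    (a *: f + g) ⊠ h = a *: (f ⊠ h) + g ⊠ h;
  tensm_linr : forall (X X' Y Y' : C) (a : K) (h : Mor X Y) (f g : Mor X' Y'),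
    h ⊠ (a *: f + g) = a *: (h ⊠ f) + h ⊠ g;
  ascK : forall X Y Z : C, ascI T X Y Z ∘ asc T X Y Z = idm _;
  ascIK : forall X Y Z : C, asc T X Y Z ∘ ascI T X Y Z = idm _;
  asc_nat : forall (X X' Y Y' Z Z' : C) (f : Mor X X') (g : Mor Y Y') (h : Mor Z Z'),
    (f ⊠ (g ⊠ h)) ∘ asc T X Y Z = asc T X' Y' Z' ∘ ((f ⊠ g) ⊠ h);
  lunK : forall X : C, lunI T X ∘ lun T X = idm _;
  lunIK : forall X : C, lun T X ∘ lunI T X = idm _;
  lun_nat : forall (X Y : C) (f : Mor X Y), f ∘ lun T X = lun T Y ∘ (idm I1 ⊠ f);
  runK : forall X : C, runI T X ∘ run T X = idm _;
  runIK : forall X : C, run T X ∘ runI T X = idm _;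
  run_nat : forall (X Y : C) (f : Mor X Y), f ∘ run T X = run T Y ∘ (f ⊠ idm I1);
  pentagon : forall W X Y Z : C,
    asc T W X (Y ⊗ Z) ∘ asc T (W ⊗ X) Y Z
    = (idm W ⊠ asc T X Y Z) ∘ asc T W (X ⊗ Y) Z ∘ (asc T W X Y ⊠ idm Z);
  triangle : forall X Y : C, (idm X ⊠ lun T Y) ∘ asc T X I1 Y = run T X ⊠ idm Y;
  end_unit : forall f : Mor I1 I1, exists! c : K, f = c *: idm I1 }.

(* Left and right dualities with the same dual objects. *)
Record dualData := DualData {
  dobj : C -> C;
  coev : forall V : C, Mor I1 (V ⊗ dobj V);
  ev   : forall V : C, Mor (dobj V ⊗ V) I1;
  coevt : forall V : C, Mor I1 (dobj V ⊗ V);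
  evt   : forall V : C, Mor (V ⊗ dobj V) I1 }.

Variable D : dualData.
Local Notation "X ^*" := (dobj D X) (at level 1, left associativity, format "X ^*").

Definition ldual_mor (V W : C) (f : Mor V W) : Mor (W^*) (V^*) :=
  lun T _ ∘ (ev D W ⊠ idm (V^*)) ∘ ((idm (W^*) ⊠ f) ⊠ idm (V^*))
    ∘ ascI T _ _ _ ∘ (idm (W^*) ⊠ coev D V) ∘ runI T _.

Definition rdual_mor (V W : C) (f : Mor V W) : Mor (W^*) (V^*) :=
  run T _ ∘ (idm (V^*) ⊠ evt D W) ∘ (idm (V^*) ⊠ (f ⊠ idm (W^*)))
    ∘ asc T _ _ _ ∘ (coevt D V ⊠ idm (W^*)) ∘ lunI T _.

Definition liso (V W : C) : Mor (W^* ⊗ V^*) ((V ⊗ W)^*) :=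
  let E : Mor ((W^* ⊗ V^*) ⊗ (V ⊗ W)) I1 :=
    ev D W ∘ (idm (W^*) ⊠ (lun T W ∘ (ev D V ⊠ idm W) ∘ ascI T _ _ _))
      ∘ asc T _ _ _ in
  lun T _ ∘ (E ⊠ idm _) ∘ ascI T _ _ _ ∘ (idm _ ⊠ coev D (V ⊗ W)) ∘ runI T _.

Definition riso (V W : C) : Mor (W^* ⊗ V^*) ((V ⊗ W)^*) :=
  let E : Mor ((V ⊗ W) ⊗ (W^* ⊗ V^*)) I1 :=
    evt D V ∘ ((run T V ∘ (idm V ⊠ evt D W) ∘ asc T _ _ _) ⊠ idm (V^*))
      ∘ ascI T _ _ _ in
  run T _ ∘ (idm _ ⊠ E) ∘ asc T _ _ _ ∘ (coevt D (V ⊗ W) ⊠ idm _) ∘ lunI T _.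

Record pivotal_axioms : Prop := {
  zz_l1 : forall V : C,
    run T V ∘ (idm V ⊠ ev D V) ∘ asc T _ _ _ ∘ (coev D V ⊠ idm V) ∘ lunI T V = idm V;
  zz_l2 : forall V : C,
    lun T (V^*) ∘ (ev D V ⊠ idm (V^*)) ∘ ascI T _ _ _ ∘ (idm (V^*) ⊠ coev D V)
      ∘ runI T (V^*) = idm (V^*);
  zz_r1 : forall V : C,
    lun T V ∘ (evt D V ⊠ idm V) ∘ ascI T _ _ _ ∘ (idm V ⊠ coevt D V) ∘ runI T V = idm V;
  zz_r2 : forall V : C,
    run T (V^*) ∘ (idm (V^*) ⊠ evt D V) ∘ asc T _ _ _ ∘ (coevt D V ⊠ idm (V^*))
      ∘ lunI T (V^*) = idm (V^*);
  piv_mor : forall (V W : C) (f : Mor V W), ldual_mor f = rdual_mor f;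
  piv_iso : forall V W : C, liso V W = riso V W }.

End Tensor.

Section Objects.
Variables (K : fieldType) (C : catData K).

Definition indecomposable (X : C) : Prop :=
  idm X <> 0 /\
  forall (Y Z : C) (i1 : Mor Y X) (p1 : Mor X Y) (i2 : Mor Z X) (p2 : Mor X Z),
    p1 ∘ i1 = idm Y -> p2 ∘ i2 = idm Z -> i1 ∘ p1 + i2 ∘ p2 = idm X ->
    idm Y = 0 \/ idm Z = 0.

(* f lies in the Jacobson radical Rad(End(X)):  1 - g f is left invertible
   for every g. *)
Definition in_rad (X : C) (f : Mor X X) : Prop :=
  forall g : Mor X X, exists h : Mor X X, h ∘ (idm X - g ∘ f) = idm X.

(* End(X)/Rad(End(X)) ≅ K, i.e. the canonical map K -> End(X)/Rad(End(X)),
   k |-> class of k Id_X, is bijective. *)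
Definition abs_indecomposable (X : C) : Prop :=
  forall f : Mor X X, exists! c : K, in_rad (f - c *: idm X).

Definition abs_simple (X : C) : Prop :=
  forall f : Mor X X, exists! c : K, f = c *: idm X.

Definition nilpotent_endo (X : C) (f : Mor X X) : Prop :=
  exists n : nat, iter n (cmp f) (idm X) = 0.

End Objects.

(* Main.v *)
Require Import Defs.
From HB Require Import structures.
From mathcomp Require Import all_boot all_algebra.
Set Implicit Arguments. Unset Strict Implicit.
Import GRing.Theory.
Local Open Scope ring_scope.

Section Base.
Variables (K : fieldType) (C : catData K) (T : tensData C).
Hypotheses (hC : kcat_axioms C) (hT : tens_axioms T).
Local Notation "X ⊗ Y" := (tens T X Y) (at level 37, left associativity).
Local Notation "f ⊠ g" := (tensm T f g) (at level 31, left associativity).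
Local Notation I1 := (tunit T).

Lemma cA (X Y Z W : C) (f : Mor Z W) (g : Mor Y Z) (h : Mor X Y) :
  f ∘ (g ∘ h) = (f ∘ g) ∘ h.
Proof. exact: (cmpA hC f g h). Qed.
Lemma c1 (X Y : C) (f : Mor X Y) : idm Y ∘ f = f. Proof. exact: (cmp1m hC f). Qed.
Lemma c1' (X Y : C) (f : Mor X Y) : f ∘ idm X = f. Proof. exact: (cmpm1 hC f). Qed.

Lemma lrw (X Y Z W : C) (x : Mor Y Z) (y : Mor X Y) (e : Mor X Z) :
  x ∘ y = e -> forall (k : Mor Z W), (k ∘ x) ∘ y = k ∘ e.
Proof. by move=> H k; rewrite -cA H. Qed.

Lemma cmp0l (X Y Z : C) (h : Mor X Y) : (0 : Mor Y Z) ∘ h = 0.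
Proof.
have := cmp_linl hC 1 (0 : Mor Y Z) 0 h; rewrite !scale1r addr0.
by move/eqP; rewrite -subr_eq0 opprD addrA subrr add0r oppr_eq0 => /eqP.
Qed.
Lemma cmp0r (X Y Z : C) (f : Mor Y Z) : f ∘ (0 : Mor X Y) = 0.
Proof.
have := cmp_linr hC 1 f (0 : Mor X Y) 0; rewrite !scale1r addr0.
by move/eqP; rewrite -subr_eq0 opprD addrA subrr add0r oppr_eq0 => /eqP.
Qed.
Lemma cmpZl (X Y Z : C) a (f : Mor Y Z) (h : Mor X Y) : (a *: f) ∘ h = a *: (f ∘ h).
Proof. by have := cmp_linl hC a f 0 h; rewrite !addr0 cmp0l addr0. Qed.
Lemma cmpZr (X Y Z : C) a (f : Mor Y Z) (h : Mor X Y) : f ∘ (a *: h) = a *: (f ∘ h).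
Proof. by have := cmp_linr hC a f h 0; rewrite !addr0 cmp0r addr0. Qed.
Lemma cmpDl (X Y Z : C) (f g : Mor Y Z) (h : Mor X Y) : (f + g) ∘ h = f ∘ h + g ∘ h.
Proof. by have := cmp_linl hC 1 f g h; rewrite !scale1r. Qed.
Lemma cmpDr (X Y Z : C) (f : Mor Y Z) (g h : Mor X Y) : f ∘ (g + h) = f ∘ g + f ∘ h.
Proof. by have := cmp_linr hC 1 f g h; rewrite !scale1r. Qed.

Lemma tens0l (X X' Y Y' : C) (h : Mor X' Y') : (0 : Mor X Y) ⊠ h = 0.
Proof.
have := tensm_linl hT 1 (0 : Mor X Y) 0 h; rewrite !scale1r addr0.
by move/eqP; rewrite -subr_eq0 opprD addrA subrr add0r oppr_eq0 => /eqP.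
Qed.
Lemma tens0r (X X' Y Y' : C) (h : Mor X Y) : h ⊠ (0 : Mor X' Y') = 0.
Proof.
have := tensm_linr hT 1 h (0 : Mor X' Y') 0; rewrite !scale1r addr0.
by move/eqP; rewrite -subr_eq0 opprD addrA subrr add0r oppr_eq0 => /eqP.
Qed.
Lemma tensZl (X X' Y Y' : C) a (f : Mor X Y) (h : Mor X' Y') : (a *: f) ⊠ h = a *: (f ⊠ h).
Proof. by have := tensm_linl hT a f 0 h; rewrite !addr0 tens0l addr0. Qed.
Lemma tensZr (X X' Y Y' : C) a (f : Mor X' Y') (h : Mor X Y) : h ⊠ (a *: f) = a *: (h ⊠ f).
Proof. by have := tensm_linr hT a h f 0; rewrite !addr0 tens0r addr0. Qed.

Lemma tc (X X' Y Y' Z Z' : C) (f : Mor Y Z) (g : Mor X Y) (f' : Mor Y' Z') (g' : Mor X' Y') :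
  (f ∘ g) ⊠ (f' ∘ g') = (f ⊠ f') ∘ (g ⊠ g').
Proof. exact: (tensm_cmp hT f g f' g'). Qed.
Lemma tid (X Y : C) : idm X ⊠ idm Y = idm (X ⊗ Y). Proof. exact: (tensm_id hT X Y). Qed.

Lemma tcl (X Y Z W : C) (f : Mor Y Z) (g : Mor X Y) : (f ∘ g) ⊠ idm W = (f ⊠ idm W) ∘ (g ⊠ idm W).
Proof. by rewrite -tc c1. Qed.
Lemma tcr (X Y Z W : C) (f : Mor Y Z) (g : Mor X Y) : idm W ⊠ (f ∘ g) = (idm W ⊠ f) ∘ (idm W ⊠ g).
Proof. by rewrite -tc c1. Qed.
Lemma xch1 (X X' Y Y' : C) (f : Mor X Y) (g : Mor X' Y') : (f ⊠ idm Y') ∘ (idm X ⊠ g) = f ⊠ g.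
Proof. by rewrite -tc c1 c1'. Qed.
Lemma xch2 (X X' Y Y' : C) (f : Mor X Y) (g : Mor X' Y') : (idm Y ⊠ g) ∘ (f ⊠ idm X') = f ⊠ g.
Proof. by rewrite -tc c1 c1'. Qed.

Lemma asc_nat' (X X' Y Y' Z Z' : C) (f : Mor X X') (g : Mor Y Y') (h : Mor Z Z') :
  ascI T X' Y' Z' ∘ (f ⊠ (g ⊠ h)) = ((f ⊠ g) ⊠ h) ∘ ascI T X Y Z.
Proof.
rewrite -[LHS]c1' -(ascIK hT) !cA -[(_ ∘ (f ⊠ _)) ∘ _]cA (asc_nat hT).
by rewrite cA (ascK hT) c1.
Qed.
Lemma lunI_nat (X Y : C) (f : Mor X Y) : lunI T Y ∘ f = (idm I1 ⊠ f) ∘ lunI T X.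
Proof.
rewrite -[LHS]c1' -(lunIK hT) !cA -[(_ ∘ f) ∘ _]cA (lun_nat hT).
by rewrite cA (lunK hT) c1.
Qed.
Lemma runI_nat (X Y : C) (f : Mor X Y) : runI T Y ∘ f = (f ⊠ idm I1) ∘ runI T X.
Proof.
rewrite -[LHS]c1' -(runIK hT) !cA -[(_ ∘ f) ∘ _]cA (run_nat hT).
by rewrite cA (runK hT) c1.
Qed.

Lemma canl_lun (X Y : C) (f g : Mor X Y) : idm I1 ⊠ f = idm I1 ⊠ g -> f = g.
Proof.
move=> H; rewrite -[f]c1' -[g]c1' -(lunIK hT) !cA (lun_nat hT) (lun_nat hT) H //.
Qed.
Lemma canr_run (X Y : C) (f g : Mor X Y) : f ⊠ idm I1 = g ⊠ idm I1 -> f = g.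
Proof.
move=> H; rewrite -[f]c1' -[g]c1' -(runIK hT) !cA (run_nat hT) (run_nat hT) H //.
Qed.
Lemma canr_asc (X Y Z W : C) (f g : Mor (X ⊗ (Y ⊗ Z)) W) : f ∘ asc T X Y Z = g ∘ asc T X Y Z -> f = g.
Proof. by move=> H; rewrite -[f]c1' -[g]c1' -(ascIK hT) !cA H. Qed.
Lemma canr_ascI (X Y Z W : C) (f g : Mor ((X ⊗ Y) ⊗ Z) W) : f ∘ ascI T X Y Z = g ∘ ascI T X Y Z -> f = g.
Proof. by move=> H; rewrite -[f]c1' -[g]c1' -(ascK hT) !cA H. Qed.
Lemma canr_ascl (X Y Z U W : C) (f g : Mor ((X ⊗ (Y ⊗ Z)) ⊗ U) W) :
  f ∘ (asc T X Y Z ⊠ idm U) = g ∘ (asc T X Y Z ⊠ idm U) -> f = g.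
Proof.
move=> H; rewrite -[f]c1' -[g]c1' -tid -(ascIK hT) -[idm U]c1 tc !cA H //.
Qed.


Lemma K1 (X Y : C) : lun T (X ⊗ Y) ∘ asc T I1 X Y = lun T X ⊠ idm Y.
Proof.
apply: canl_lun; apply: (@canr_asc I1 (I1 ⊗ X) Y).
rewrite [RHS](asc_nat hT).
apply: (@canr_ascl I1 I1 X Y).
rewrite tcr -!cA -(pentagon hT) cA (triangle hT) -(tid X Y) (asc_nat hT).
by rewrite -(triangle hT) tcl.
Qed.


Lemma canl_asc (X Y Z W : C) (f g : Mor W ((X ⊗ Y) ⊗ Z)) : asc T X Y Z ∘ f = asc T X Y Z ∘ g -> f = g.
Proof. by move=> H; rewrite -[f]c1 -[g]c1 -(ascK hT) -!cA H. Qed.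

Lemma K2 (X Y : C) : (idm X ⊠ run T Y) ∘ asc T X Y I1 = run T (X ⊗ Y).
Proof.
apply: canr_run; apply: (@canl_asc X Y I1).
rewrite tcl cA -(asc_nat hT) -(triangle hT Y I1) tcr -!cA -(pentagon hT).
by rewrite cA (asc_nat hT) tid -cA (triangle hT).
Qed.

Lemma K3 : lun T I1 = run T I1.
Proof.
apply: canr_run.
have E : lun T (I1 ⊗ I1) = idm I1 ⊠ lun T I1.
  by rewrite -[LHS]c1 -(lunK hT I1) -cA (lun_nat hT) cA (lunK hT) c1.
by rewrite -(K1 I1 I1) -(triangle hT) E.
Qed.


Lemma iso_l (X Y Z : C) (u : Mor Y Z) (v : Mor Z Y) : v ∘ u = idm Y ->
  forall f g : Mor X Y, u ∘ f = u ∘ g -> f = g.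
Proof. by move=> uv f g H; rewrite -[f]c1 -[g]c1 -uv -!cA H. Qed.
Lemma iso_r (X Y Z : C) (u : Mor X Y) (v : Mor Y X) : u ∘ v = idm Y ->
  forall f g : Mor Y Z, f ∘ u = g ∘ u -> f = g.
Proof. by move=> uv f g H; rewrite -[f]c1' -[g]c1' -uv !cA H. Qed.

Lemma K1I (X Y : C) : lunI T X ⊠ idm Y = ascI T I1 X Y ∘ lunI T (X ⊗ Y).
Proof.
apply: (@iso_l _ _ _ (lun T X ⊠ idm Y) (lunI T X ⊠ idm Y)).
  by rewrite -tcl (lunK hT) tid.
by rewrite -tcl (lunIK hT) tid -(K1 X Y) cA -[(_ ∘ asc _ _ _ _) ∘ _]cA (ascIK hT) c1' (lunIK hT).
Qed.

Lemma K2I (X Y : C) : idm X ⊠ runI T Y = asc T X Y I1 ∘ runI T (X ⊗ Y).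
Proof.
apply: (@iso_l _ _ _ (idm X ⊠ run T Y) (idm X ⊠ runI T Y)).
  by rewrite -tcr (runK hT) tid.
by rewrite -tcr (runIK hT) tid cA (K2 X Y) (runIK hT).
Qed.

Lemma K3I : lunI T I1 = runI T I1.
Proof.
by rewrite -[LHS]c1' -(runIK hT) -K3 cA (lunK hT) c1.
Qed.

Lemma P' (W X Y Z : C) : (idm W ⊠ ascI T X Y Z) ∘ asc T W X (Y ⊗ Z)
  = asc T W (X ⊗ Y) Z ∘ (asc T W X Y ⊠ idm Z) ∘ ascI T (W ⊗ X) Y Z.
Proof.
apply: (@iso_r _ _ _ (asc T (W ⊗ X) Y Z) (ascI T (W ⊗ X) Y Z) (ascIK hT _ _ _)).
rewrite -cA (pentagon hT) cA -tcr (ascK hT) tid c1.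
by rewrite -!cA (ascK hT) c1'.
Qed.


Lemma K2' (X Y : C) : idm X ⊠ run T Y = run T (X ⊗ Y) ∘ ascI T X Y I1.
Proof. by rewrite -K2 -cA (ascIK hT) c1'. Qed.

Lemma P'' (W X Y Z : C) : asc T (W ⊗ X) Y Z ∘ (ascI T W X Y ⊠ idm Z)
  = ascI T W X (Y ⊗ Z) ∘ (idm W ⊠ asc T X Y Z) ∘ asc T W (X ⊗ Y) Z.
Proof.
apply: (@iso_l _ _ _ (asc T W X (Y ⊗ Z)) (ascI T W X (Y ⊗ Z)) (ascK hT _ _ _)).
rewrite [RHS]cA (ascIK hT) c1 cA (pentagon hT) -!cA -tcl (ascIK hT) tid c1'.
by [].
Qed.

Lemma T' (X Y : C) : asc T X I1 Y ∘ (runI T X ⊠ idm Y) = idm X ⊠ lunI T Y.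
Proof.
apply: (@iso_l _ _ _ (idm X ⊠ lun T Y) (idm X ⊠ lunI T Y)).
  by rewrite -tcr (lunK hT) tid.
by rewrite cA (triangle hT) -tcl (runIK hT) tid -tcr (lunIK hT) tid.
Qed.

End Base.

Section Dual.
Variables (K : fieldType) (C : catData K) (T : tensData C) (D : dualData T).
Hypotheses (hC : kcat_axioms C) (hT : tens_axioms T) (hD : pivotal_axioms D).
Local Notation "X ⊗ Y" := (tens T X Y) (at level 37, left associativity).
Local Notation "f ⊠ g" := (tensm T f g) (at level 31, left associativity).
Local Notation I1 := (tunit T).
Local Notation "X ^*" := (dobj D X) (at level 1, left associativity, format "X ^*").
Local Notation cA := (cA hC).
Local Notation lrw := (lrw hC).

Lemma Z1 (V : C) (g : Mor I1 (V ⊗ V^*)) :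
  ((run T V ∘ (idm V ⊠ ev D V) ∘ asc T V (V^*) V ∘ (g ⊠ idm V) ∘ lunI T V) ⊠ idm (V^*)) ∘ coev D V
  = (idm V ⊠ (lun T (V^*) ∘ (ev D V ⊠ idm (V^*)) ∘ ascI T _ _ _ ∘ (idm (V^*) ⊠ coev D V) ∘ runI T (V^*))) ∘ g.
Proof.
rewrite !(tcl hC hT) !(tcr hC hT) ?cA.
rewrite (K1I hC hT V (V^*)) ?cA (lrw (lunI_nat hC hT (coev D V))) ?cA.
rewrite (lrw (esym (asc_nat' hC hT g _ _))) ?cA (tid hT) (lrw (xch1 hC hT g (coev D V))).
rewrite (K2I hC hT V (V^*)) ?cA (lrw (asc_nat hT (idm V) (idm (V^*)) (coev D V))) ?cA (tid hT).
rewrite (lrw (runI_nat hC hT g)) ?cA (lrw (xch2 hC hT g (coev D V))) (K3I hC hT).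
congr ((_ ∘ _) ∘ _).
rewrite -[(_ ∘ (idm _ ⊠ ascI _ _ _ _)) ∘ _]cA (P' hC hT) ?cA.
rewrite (lrw (asc_nat hT (idm V) (ev D V) (idm (V^*)))).
by rewrite ?cA (triangle hT).
Qed.

Lemma Z2 (V : C) (h : Mor (V ⊗ V^*) I1) :
  evt D V ∘ ((lun T V ∘ (h ⊠ idm V) ∘ ascI T V (V^*) V ∘ (idm V ⊠ coevt D V) ∘ runI T V) ⊠ idm (V^*))
  = h ∘ (idm V ⊠ (run T (V^*) ∘ (idm (V^*) ⊠ evt D V) ∘ asc T _ _ _ ∘ (coevt D V ⊠ idm (V^*)) ∘ lunI T (V^*))).
Proof.
rewrite !(tcl hC hT) !(tcr hC hT) ?cA.
rewrite -(K1 hC hT V (V^*)) ?cA (lun_nat hT (evt D V)) ?cA.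
rewrite (lrw (esym (asc_nat hT h (idm V) (idm (V^*))))) ?cA (tid hT) (lrw (xch2 hC hT h (evt D V))).
rewrite (K2' hC hT V (V^*)) ?cA (run_nat hT h) ?cA.
rewrite (lrw (asc_nat' hC hT (idm V) (idm (V^*)) (evt D V))) ?cA (tid hT) (lrw (xch1 hC hT h (evt D V))).
rewrite -(K3 hC hT) -?cA; congr (_ ∘ (_ ∘ _)).
rewrite cA (P'' hC hT) -?cA; congr (_ ∘ (_ ∘ _)).
by rewrite cA -(asc_nat hT (idm V) (coevt D V) (idm (V^*))) -cA (T' hC hT).
Qed.

Lemma scal_can (V : lmodType K) (a b : K) (v : V) : v != 0 -> a *: v = b *: v -> a = b.
Proof.
move=> nz H; apply/eqP; rewrite -subr_eq0.
have : (a - b) *: v == 0 by rewrite scalerBl H subrr.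
by rewrite scaler_eq0 (negbTE nz) orbF.
Qed.

Lemma idm_neq0 (V : C) : abs_simple V -> idm V != 0.
Proof.
move=> hV; apply/eqP => E; have [c [_ U]] := hV (idm V).
have h0 := U 0; have h1 := U 1.
have : (0 : K) = 1 by rewrite -h0 ?h1 ?scale0r ?scale1r // E.
by move/eqP; rewrite eq_sym oner_eq0.
Qed.

Lemma Span1 (V : C) : abs_simple V -> forall g : Mor I1 (V ⊗ V^*), exists c, g = c *: coev D V.
Proof.
move=> hV g.
have [c [Ec _]] := hV (run T V ∘ (idm V ⊠ ev D V) ∘ asc T V (V^*) V ∘ (g ⊠ idm V) ∘ lunI T V).
exists c; have := Z1 g; rewrite (zz_l2 hD V) (tid hT) (c1 hC) => <-.
by rewrite Ec (tensZl hT) (tid hT) (cmpZl hC) (c1 hC).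
Qed.

Lemma Span2 (V : C) : abs_simple V -> forall h : Mor (V ⊗ V^*) I1, exists c, h = c *: evt D V.
Proof.
move=> hV h.
have [c [Ec _]] := hV (lun T V ∘ (h ⊠ idm V) ∘ ascI T V (V^*) V ∘ (idm V ⊠ coevt D V) ∘ runI T V).
exists c; have := Z2 h; rewrite (zz_r2 hD V) (tid hT) (c1' hC) => <-.
by rewrite Ec (tensZl hT) (tid hT) (cmpZr hC) (c1' hC).
Qed.

Lemma coev_neq0 (V : C) : abs_simple V -> coev D V != 0.
Proof.
move=> hV; apply/eqP => E; move: (zz_l1 hD V); rewrite E (tens0l hT) (cmp0l hC) !(cmp0r hC) => E'.
by move: (idm_neq0 hV); rewrite -E' eqxx.
Qed.

Lemma evt_neq0 (V : C) : abs_simple V -> evt D V != 0.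
Proof.
move=> hV; apply/eqP => E; move: (zz_r1 hD V); rewrite E (tens0l hT) (cmp0l hC) !(cmp0r hC) => E'.
by move: (idm_neq0 hV); rewrite -E' eqxx.
Qed.
End Dual.
Unset Implicit Arguments. Set Strict Implicit.


Theorem lemma3p1 (K : fieldType) (C : catData K) (T : tensData C) (D : dualData T)
  (hC : kcat_axioms C) (hA : additive_cat C) (hT : tens_axioms T)
  (hD : pivotal_axioms D)
  (h_absind : forall X : C, indecomposable X -> abs_indecomposable X)
  (h_nil : forall X : C, indecomposable X ->
     forall f : Mor X X, in_rad f -> nilpotent_endo f)
  (V : C) (hV : abs_simple V)
  (I : finType) (W : I -> C)
  (i : forall k : I, Mor (W k) (tens T V (dobj D V)))
  (p : forall k : I, Mor (tens T V (dobj D V)) (W k))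
  (hW : forall k : I, indecomposable (W k))
  (hpi : forall k : I, p k ∘ i k = idm (W k))
  (horth : forall k l : I, k != l -> (i k ∘ p k) ∘ (i l ∘ p l) = 0)
  (hsum : \sum_(k : I) (i k ∘ p k) = idm (tens T V (dobj D V))) :
  ((forall j : I,
      (i j ∘ p j) ∘ coev D V = coev D V <->
      ((exists f : Mor (tunit T) (W j), f <> 0) /\
       forall f : Mor (tunit T) (W j), exists c : K, f = c *: (p j ∘ coev D V)))
   /\ exists! j : I, (i j ∘ p j) ∘ coev D V = coev D V)
  /\
  ((forall j : I,
      evt D V ∘ (i j ∘ p j) = evt D V <->
      ((exists f : Mor (W j) (tunit T), f <> 0) /\
       forall f : Mor (W j) (tunit T), exists c : K, f = c *: (evt D V ∘ i j)))
   /\ exists! j : I, evt D V ∘ (i j ∘ p j) = evt D V).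
Proof.
have cnz := coev_neq0 hC hT hD hV.
have enz := evt_neq0 hC hT hD hV.
have idem : forall k, (i k ∘ p k) ∘ (i k ∘ p k) = i k ∘ p k.
  by move=> k; rewrite -(cA hC) (cA hC (p k)) hpi (c1 hC).
split.
- split.
  + move=> j; split.
    * move=> Ej; split.
        exists (p j ∘ coev D V) => E0; move/eqP: cnz; apply.
        by rewrite -Ej -(cA hC) E0 (cmp0r hC).
      move=> f; have [c Ec] := Span1 hC hT hD hV (i j ∘ f); exists c.
      by rewrite -[f](c1 hC) -hpi -(cA hC) Ec (cmpZr hC).
    * move=> [[f0 nz] sp].
      have pnz : p j ∘ coev D V != 0.
        by apply/eqP => E; apply: nz; have [d ->] := sp f0; rewrite E scaler0.
      have [c Ec] := Span1 hC hT hD hV ((i j ∘ p j) ∘ coev D V).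
      have : p j ∘ ((i j ∘ p j) ∘ coev D V) = p j ∘ coev D V.
        by rewrite !(cA hC) hpi (c1 hC).
      rewrite Ec (cmpZr hC) -{2}[p j ∘ coev D V]scale1r => /(scal_can pnz) ->.
      by rewrite scale1r.
  + have [j Hj] : exists j, (i j ∘ p j) ∘ coev D V = coev D V.
      case: (boolP [exists k, (i k ∘ p k) ∘ coev D V == coev D V]) => [/existsP [j /eqP Hj] | H].
        by exists j.
      have H0 : forall k, (i k ∘ p k) ∘ coev D V = 0.
        move=> k; have [c Ec] := Span1 hC hT hD hV ((i k ∘ p k) ∘ coev D V).
        case: (eqVneq c 0) => [c0|cn0]; first by rewrite Ec c0 scale0r.
        have : (i k ∘ p k) ∘ ((i k ∘ p k) ∘ coev D V) = (i k ∘ p k) ∘ coev D V.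
          by rewrite (cA hC) idem.
        rewrite {1}Ec (cmpZr hC) Ec scalerA -{2}[c *: _]scale1r -{3}(mul1r c).
        move/(scal_can cnz)/(mulIf cn0) => c1E.
        by move/existsPn: H => /(_ k); rewrite Ec c1E scale1r eqxx.
      exfalso; move/eqP: cnz; apply.
      rewrite -[coev D V](c1 hC) -hsum.
      rewrite (big_morph (fun f => f ∘ coev D V) (fun f g => cmpDl hC f g _) (cmp0l hC _ (coev D V))).
      by rewrite big1.
    exists j; split => // l Hl; apply/eqP; apply/negP => /negP ne.
    move/eqP: cnz; apply.
    by rewrite -Hj -Hl (cA hC) horth // (cmp0l hC).
- split.
  + move=> j; split.
    * move=> Ej; split.
        exists (evt D V ∘ i j) => E0; move/eqP: enz; apply.
        by rewrite -Ej (cA hC) E0 (cmp0l hC).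
      move=> f; have [c Ec] := Span2 hC hT hD hV (f ∘ p j); exists c.
      by rewrite -[f](c1' hC) -hpi (cA hC) Ec (cmpZl hC).
    * move=> [[f0 nz] sp].
      have pnz : evt D V ∘ i j != 0.
        by apply/eqP => E; apply: nz; have [d ->] := sp f0; rewrite E scaler0.
      have [c Ec] := Span2 hC hT hD hV (evt D V ∘ (i j ∘ p j)).
      have : (evt D V ∘ (i j ∘ p j)) ∘ i j = evt D V ∘ i j.
        by rewrite -!(cA hC) hpi (c1' hC).
      rewrite Ec (cmpZl hC) -{2}[evt D V ∘ i j]scale1r => /(scal_can pnz) ->.
      by rewrite scale1r.
  + have [j Hj] : exists j, evt D V ∘ (i j ∘ p j) = evt D V.
      case: (boolP [exists k, evt D V ∘ (i k ∘ p k) == evt D V]) => [/existsP [j /eqP Hj] | H].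
        by exists j.
      have H0 : forall k, evt D V ∘ (i k ∘ p k) = 0.
        move=> k; have [c Ec] := Span2 hC hT hD hV (evt D V ∘ (i k ∘ p k)).
        case: (eqVneq c 0) => [c0|cn0]; first by rewrite Ec c0 scale0r.
        have : (evt D V ∘ (i k ∘ p k)) ∘ (i k ∘ p k) = evt D V ∘ (i k ∘ p k).
          by rewrite -(cA hC) idem.
        rewrite {1}Ec (cmpZl hC) Ec scalerA -{2}[c *: _]scale1r -{3}(mul1r c).
        move/(scal_can enz)/(mulIf cn0) => c1E.
        by move/existsPn: H => /(_ k); rewrite Ec c1E scale1r eqxx.
      exfalso; move/eqP: enz; apply.
      rewrite -[evt D V](c1' hC) -hsum.
      rewrite (big_morph (fun f => evt D V ∘ f) (fun f g => cmpDr hC _ f g) (cmp0r hC _ (evt D V))).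
      by rewrite big1.
    exists j; split => // l Hl; apply/eqP; apply/negP => /negP ne.
    move/eqP: enz; apply.
    by rewrite -Hl -Hj -(cA hC) horth // (cmp0r hC).
Qed.
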